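(* The allegories $\mathsf{StoneE}^\mathsf{R}$ and $\mathsf{SubS5^S}$ are equivalent. The equivalence sends an $\mathsf{S5}$-subordination space $(X,E)$ to $(\mathsf{Clop}(X),S_E)$ and a compatible closed relation $R$ to $S_R$, and its quasi-inverse sends an $\mathsf{S5}$-subordination algebra $(B,S)$ to $(\mathsf{Ult}(B),R_S)$ and a compatible subordination $T$ to $R_T$.
   Context: For a closed relation $R$ between Stone spaces, $S_R$ is the relation between clopen algebras given by $U\mathrel{S_R}V\iff R[U]\subseteq V$; for a relation $S$ between boolean algebras, $R_S$ is the relation between ultrafilter spaces given by $x\mathrel{R_S}y\iff S[x]\subseteq y$. A subordination $S\colon A\to B$ between boolean algebras is a relation satisfying: (S1) $0\mathrel{S}0$, $1\mathrel{S}1$; (S2) $a,b\mathrel{S}c\Rightarrow(a\vee b)\mathrel{S}c$; (S3) $a\mathrel{S}c,d\Rightarrow a\mathrel{S}(c\wedge d)$; (S4) $a\le b\mathrel{S}c\le d\Rightarrow a\mathrel{S}d$. An $\mathsf{S5}$-subordination on $B$ is a subordination $S\colon B\to B$ satisfying (S5) $a\mathrel{S}b\Rightarrow a\le b$; (S6) $a\mathrel{S}b\Rightarrow\neg b\mathrel{S}\neg a$; (S7) $a\mathrel{S}b\Rightarrow\exists c\,(a\mathrel{S}c$ and $c\mathrel{S}b)$. $\mathsf{StoneE}^\mathsf{R}$: objects are pairs $(X,E)$ with $X$ a Stone space and $E$ a closed equivalence relation on $X$ ($\mathsf{S5}$-subordination spaces); morphisms $(X,E)\to(X',E')$ are closed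 relations $R\subseteq X\times X'$ with $R\circ E=R=E'\circ R$ (compatible closed relations); identity on $(X,E)$ is $E$; composition is relational composition; hom-sets ordered by inclusion; dagger is converse relation. $\mathsf{SubS5^S}$: objects are pairs $(B,S)$ with $B$ a boolean algebra and $S$ an $\mathsf{S5}$-subordination ($\mathsf{S5}$-subordination algebras); morphisms $(B,S)\to(B',S')$ are subordinations $T\colon B\to B'$ with $T\circ S=T=S'\circ T$ (compatible subordinations); identity on $(B,S)$ is $S$; composition relational; hom-sets ordered by reverse inclusion; dagger $T^\dagger$ given by $b\mathrel{T^\dagger}a$ iff $\neg a\mathrel{T}\neg b$. An allegory is an order-enriched dagger category with binary meets in hom-sets, monotone dagger, and modular law $gf\wedge h\le(g\wedge hf^\dagger)f$; an equivalence of allegories is a functor that is an equivalence of categories, preserves binary meets of morphisms and commutes with daggers. *)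

(* Defs.v *)
From HB Require Import structures.
From mathcomp Require Import all_ssreflect_compat all_algebra.
From mathcomp Require Import all_classical topology.
Import Order.Theory.
Set Implicit Arguments. Unset Strict Implicit. Unset Printing Implicit Defensive.
Local Open Scope classical_set_scope.

Definition stone_space (X : topologicalType) : Prop :=
  [/\ compact [set: X], hausdorff_space X & zero_dimensional X].

Definition clopb (X : topologicalType) : {pred (set X)} := fun A => `[< clopen A >].

Arguments clopb : clear implicits.
Record Clop (X : topologicalType) := ClopSet { clop_val :> set X; clop_valP : clopb X clop_val }.

Section ClopInstances.
Variable X : topologicalType.
HB.instance Definition _ := [isSub for @clop_val X].
HB.instance Definition _ := [Choice of Clop X by <:].

Lemma clopb_meet : {in clopb X &, forall u v, (u `&` v)%O \in clopb X}.
Proof.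
move=> A B /asboolP [oA cA] /asboolP [oB cB]; apply/asboolP; split.
  exact: openI. exact: closedI.
Qed.
Lemma clopb_join : {in clopb X &, forall u v, (u `|` v)%O \in clopb X}.
Proof.
move=> A B /asboolP [oA cA] /asboolP [oB cB]; apply/asboolP; split.
  exact: openU. exact: closedU.
Qed.
Lemma clopb_bot : (\bot%O : set X) \in clopb X.
Proof. by apply/asboolP; split; [exact: open0 | exact: closed0]. Qed.
Lemma clopb_top : (\top%O : set X) \in clopb X.
Proof. by apply/asboolP; split; [exact: openT | exact: closedT]. Qed.

HB.instance Definition _ := Order.SubChoice_isTBSubLattice.Build
  _ _ (clopb X) set_display (Clop X)
  clopb_meet clopb_join clopb_bot clopb_top.


Lemma clop_meetUl : @left_distributive (Clop X) (Clop X) Order.meet Order.join.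
Proof.
move=> x y z; apply: val_inj.
by rewrite /= meetUl.
Qed.
HB.instance Definition _ := Order.Lattice_Meet_isDistrLattice.Build _ (Clop X) clop_meetUl.

Lemma clopb_compl (A : Clop X) : (~` (val A))%O \in clopb X.
Proof.
have /asboolP [oA cA] := clop_valP A; apply/asboolP; split.
  exact: closed_openC. exact: open_closedC.
Qed.
Definition clop_compl (A : Clop X) : Clop X := ClopSet (clopb_compl A).
Lemma clop_joinxC (A : Clop X) : (A `|` clop_compl A)%O = \top%O.
Proof. apply: val_inj; by rewrite /= joinxC. Qed.
Lemma clop_meetxC (A : Clop X) : (A `&` clop_compl A)%O = \bot%O.
Proof. apply: val_inj; by rewrite /= meetxC. Qed.
HB.instance Definition _ := Order.TBDistrLattice_hasComplement.Build _ (Clop X) clop_joinxC clop_meetxC.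
End ClopInstances.

Section Ultrafilters.
Context {d : Order.disp_t} (B : ctbDistrLatticeType d).
Local Open Scope order_scope.

Definition is_filter (F : set B) : Prop :=
  [/\ F \top,
      (forall a b, F a -> F b -> F (a `&` b)) &
      (forall a b, F a -> a <= b -> F b)].

Definition proper_filter (F : set B) : Prop := is_filter F /\ ~ F \bot.

Definition ultrafilter (F : set B) : Prop :=
  proper_filter F /\ (forall G, proper_filter G -> F `<=` G -> G = F).

Definition Ult : Type := set_type ultrafilter.
HB.instance Definition _ := Choice.on Ult.

Definition ult_basic : set (set Ult) :=
  [set [set x : Ult | (val x) a] | a in [set: B]].

HB.instance Definition _ :=
  isSubBaseTopological.Build Ult ult_basic id.
End Ultrafilters.
Arguments Ult {d} B.

(* rcomp R R' is the relational composite "first R, then R'",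
   i.e. R' o R in the usual notation.                                       *)
Definition rcomp {X Y Z : Type} (R : set (X * Y)) (R' : set (Y * Z)) : set (X * Z) :=
  [set p | exists y, R (p.1, y) /\ R' (y, p.2)].

Definition rconv {X Y : Type} (R : set (X * Y)) : set (Y * X) :=
  [set p | R (p.2, p.1)].

Definition rimage {X Y : Type} (R : set (X * Y)) (U : set X) : set Y :=
  [set y | exists2 x, U x & R (x, y)].

Definition closed_equiv {X : topologicalType} (E : set (X * X)) : Prop :=
  [/\ closed E, (forall x, E (x, x)),
      (forall x y, E (x, y) -> E (y, x)) &
      (forall x y z, E (x, y) -> E (y, z) -> E (x, z))].

Definition compat_closed_rel {X Y : topologicalType}
  (E : set (X * X)) (E' : set (Y * Y)) (R : set (X * Y)) : Prop :=
  [/\ closed R, rcomp E R = R & rcomp R E' = R].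

Definition is_meet_ccr {X Y : topologicalType}
  (E : set (X * X)) (E' : set (Y * Y)) (R1 R2 M : set (X * Y)) : Prop :=
  [/\ compat_closed_rel E E' M, M `<=` R1, M `<=` R2 &
      (forall N, compat_closed_rel E E' N -> N `<=` R1 -> N `<=` R2 -> N `<=` M)].

Definition bcomp {A B C : Type} (T : A -> B -> Prop) (T' : B -> C -> Prop) : A -> C -> Prop :=
  fun a c => exists b, T a b /\ T' b c.

Definition brel_sub {A B : Type} (T T' : A -> B -> Prop) : Prop :=
  forall a b, T a b -> T' a b.

Section Subordinations.
Local Open Scope order_scope.
Context {dA dB : Order.disp_t} {A : ctbDistrLatticeType dA} {B : ctbDistrLatticeType dB}.

Definition subordination (S : A -> B -> Prop) : Prop :=
  [/\ S \bot \bot /\ S \top \top,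
      (forall a b c, S a c -> S b c -> S (a `|` b) c),
      (forall a c e, S a c -> S a e -> S a (c `&` e)) &
      (forall a b c e, a <= b -> S b c -> c <= e -> S a e)].

Definition bdag (T : A -> B -> Prop) : B -> A -> Prop :=
  fun b a => T (~` a) (~` b).

Definition RS (T : A -> B -> Prop) : set (Ult A * Ult B) :=
  [set p | [set b | exists2 a, val p.1 a & T a b] `<=` val p.2].
End Subordinations.

Definition S5_subordination {d : Order.disp_t} {B : ctbDistrLatticeType d}
  (S : B -> B -> Prop) : Prop :=
  [/\ subordination S,
      (forall a b, S a b -> (a <= b)%O),
      (forall a b, S a b -> S (~` b)%O (~` a)%O) &
      (forall a b, S a b -> exists c, S a c /\ S c b)].

Definition compat_sub {dA dB : Order.disp_t}
  {A : ctbDistrLatticeType dA} {B : ctbDistrLatticeType dB}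
  (S : A -> A -> Prop) (S' : B -> B -> Prop) (T : A -> B -> Prop) : Prop :=
  [/\ subordination T, bcomp S T = T & bcomp T S' = T].

(* M is the binary meet of T1, T2 in the hom-poset SubS5^S((A,S),(B,S'))
   ordered by REVERSE inclusion (T <= T' iff T' \subseteq T) *)
Definition is_meet_csub {dA dB : Order.disp_t}
  {A : ctbDistrLatticeType dA} {B : ctbDistrLatticeType dB}
  (S : A -> A -> Prop) (S' : B -> B -> Prop) (T1 T2 M : A -> B -> Prop) : Prop :=
  [/\ compat_sub S S' M, brel_sub T1 M, brel_sub T2 M &
      (forall N, compat_sub S S' N -> brel_sub T1 N -> brel_sub T2 N -> brel_sub M N)].

Definition SR {X Y : topologicalType} (R : set (X * Y)) : Clop X -> Clop Y -> Prop :=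
  fun U V => rimage R (clop_val U) `<=` clop_val V.

(* Main.v *)
Require Import Defs.
From HB Require Import structures.
From mathcomp Require Import all_ssreflect_compat all_algebra.
From mathcomp Require Import all_classical topology.
Import Order.Theory.
Set Implicit Arguments. Unset Strict Implicit. Unset Printing Implicit Defensive.
Local Open Scope classical_set_scope.

Section UF.
Context {d : Order.disp_t} (B : ctbDistrLatticeType d).
Local Open Scope order_scope.
Implicit Types (a b c : B) (F G : set B).

Definition ideal (I : set B) : Prop :=
  [/\ I \bot, (forall a b, I a -> I b -> I (a `|` b)) &
      (forall a b, I b -> a <= b -> I a)].

Lemma meet_bot_leC a b : a `&` b <= \bot -> a <= ~` b.
Proof. by move=> h; rewrite -disj_leC; apply/eqP/le_anti; rewrite h le0x. Qed.

Lemma uf_filter (x : Ult B) : is_filter (val x).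
Proof. by have /set_mem [[]] := valP x. Qed.

Lemma uf_proper (x : Ult B) : ~ val x \bot.
Proof. by have /set_mem [[]] := valP x. Qed.

Lemma uf_max (x : Ult B) G : proper_filter G -> val x `<=` G -> G = val x.
Proof. by have /set_mem [_] := valP x; apply. Qed.

Lemma uf_top (x : Ult B) : val x \top.
Proof. by case: (uf_filter x). Qed.

Lemma uf_meet (x : Ult B) a b : val x a -> val x b -> val x (a `&` b).
Proof. by case: (uf_filter x) => _ h _; apply: h. Qed.

Lemma uf_up (x : Ult B) a b : val x a -> a <= b -> val x b.
Proof. by case: (uf_filter x) => _ _ h; apply: h. Qed.

Lemma uf_meetE (x : Ult B) a b : val x (a `&` b) <-> val x a /\ val x b.
Proof.
split; last by case; apply: uf_meet.
by move=> h; split; apply: uf_up h _; rewrite ?leIl ?leIr.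
Qed.

Lemma uf_compl (x : Ult B) a : val x a \/ val x (~` a).
Proof.
have [xa|nxa] := pselect (val x a); [by left|right].
pose G := [set c | exists2 f, val x f & f `&` a <= c].
have fG : is_filter G.
  split.
  - by exists \top; [exact: uf_top | exact: lex1].
  - move=> c e [f xf hf] [g xg hg]; exists (f `&` g); first exact: uf_meet.
    rewrite lexI; apply/andP; split; apply: le_trans _ hf || apply: le_trans _ hg.
      by apply: leI2 => //; exact: leIl.
    by apply: leI2 => //; exact: leIr.
  - by move=> c e [f xf hf] ce; exists f => //; exact: le_trans ce.
have xG : val x `<=` G by move=> f xf; exists f => //; exact: leIl.
have [Gbot|nGbot] := pselect (G \bot); last first.
  have := uf_max (conj fG nGbot) xG => GE.
  by exfalso; apply: nxa; rewrite -GE; exists \top; [exact: uf_top | rewrite meetC leIl].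
case: Gbot => f xf hf; apply: uf_up xf _; exact: meet_bot_leC.
Qed.

Lemma uf_nC (x : Ult B) a : val x a -> ~ val x (~` a).
Proof.
move=> xa xna; have := uf_proper (x:=x); apply; rewrite -(meetxC a); exact: uf_meet.
Qed.

Lemma uf_CE (x : Ult B) a : val x (~` a) <-> ~ val x a.
Proof.
split; first by move=> h xa; exact: uf_nC xa h.
by move=> h; case: (uf_compl x a).
Qed.

Lemma uf_join (x : Ult B) a b : val x (a `|` b) -> val x a \/ val x b.
Proof.
move=> h; have [xa|nxa] := pselect (val x a); [by left|right].
have [xb|nxb] := pselect (val x b) => //; exfalso.
have := uf_meet ((uf_CE _ _).2 nxa) ((uf_CE _ _).2 nxb).
by rewrite -complU; apply: uf_nC.
Qed.

Lemma uf_joinE (x : Ult B) a b : val x (a `|` b) <-> val x a \/ val x b.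
Proof.
split; first exact: uf_join.
by case=> h; apply: uf_up h _; rewrite ?leUl ?leUr.
Qed.

Lemma uf_eq (x y : Ult B) : val x `<=` val y -> x = y.
Proof.
move=> h; apply: val_inj; apply: esym; apply: uf_max h.
by split; [exact: uf_filter | exact: uf_proper].
Qed.

Definition mkUlt F (h : ultrafilter F) : Ult B := exist _ F (mem_set h).

Lemma pft F I : is_filter F -> ideal I -> (forall a, F a -> ~ I a) ->
  exists x : Ult B, F `<=` val x /\ (forall a, val x a -> ~ I a).
Proof.
move=> fF [I0 IU Id] FI.
pose good (A : set B) := [/\ is_filter A, F `<=` A & forall a, A a -> ~ I a].
pose P (A : set B) := A = set0 \/ good A.
have [A [PA Amax]] : exists A, P A /\ (forall C, A `<` C -> ~ P C).
  apply: Zorn_bigcup => Q QP Qtot.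
  have [[G0 QG0 nG0]|Q0] := pselect (exists2 G0, Q G0 & G0 !=set0); last first.
    left; apply/seteqP; split=> // b [G QG Gb]; apply: Q0; exists G => //.
    by exists b.
  have goodQ G a : Q G -> G a -> good G.
    move=> QG Ga; case: (QP _ QG) => // G0e; by rewrite G0e in Ga.
  have [b G0b] := nG0; have gG0 := goodQ _ _ QG0 G0b.
  right; split.
  - split.
    + by exists G0 => //; case: gG0 => [[]].
    + move=> a c [G1 QG1 G1a] [G2 QG2 G2c].
      have g1 := goodQ _ _ QG1 G1a; have g2 := goodQ _ _ QG2 G2c.
      case: (Qtot _ _ QG1 QG2) => s.
        exists G2 => //; case: g2 => [[_ hm _] _ _]; apply: hm => //; exact: s.
      exists G1 => //; case: g1 => [[_ hm _] _ _]; apply: hm => //; exact: s.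
    + move=> a c [G1 QG1 G1a] ac; exists G1 => //.
      have [[_ _ hu] _ _] := goodQ _ _ QG1 G1a; exact: hu G1a ac.
  - by move=> a Fa; exists G0 => //; case: gG0 => _ h _; exact: h.
  - by move=> a [G1 QG1 G1a]; have [_ _ h] := goodQ _ _ QG1 G1a; exact: h.
have gF : good F by split.
have gA : good A.
  case: PA => // A0; exfalso; apply: (Amax F); last by right.
  rewrite A0; split=> //; move=> /(_ \top) h.
  by case: fF => Ft _ _; case: (h Ft).
case: gA => fA FA AI.
have nAbot : ~ A \bot by move=> /AI.
have Acompl a : A a \/ A (~` a).
  have gen c : ~ A c -> exists2 f, A f & I (f `&` c).
    move=> nAc.
    pose G := [set e | exists2 f, A f & f `&` c <= e].
    have fG : is_filter G.
      split.
      - by exists \top; [case: fA | exact: lex1].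
      - move=> e1 e2 [f1 A1 h1] [f2 A2 h2]; exists (f1 `&` f2).
          by case: fA => _ hm _; exact: hm.
        rewrite lexI; apply/andP; split.
          apply: le_trans h1; apply: leI2 => //; exact: leIl.
        apply: le_trans h2; apply: leI2 => //; exact: leIr.
      - by move=> e1 e2 [f A1 h1] h2; exists f => //; exact: le_trans h2.
    have AG : A `<=` G by move=> f Af; exists f => //; exact: leIl.
    apply: contrapT => nex.
    apply: (Amax G); last first.
      right; split=> //; first by move=> f /FA /AG.
      move=> e [f Af hf] Ie; apply: nex; exists f => //; exact: (Id _ _ Ie hf).
    split=> // hGA; apply: nAc; apply: hGA; exists \top; first by case: fA.
    by rewrite meetC leIl.
  have [Aa|nAa] := pselect (A a); [by left|].
  have [Ana|nAna] := pselect (A (~` a)); [by right|exfalso].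
  have [f1 A1 I1] := gen _ nAa; have [f2 A2 I2] := gen _ nAna.
  have Af : A (f1 `&` f2) by case: fA => _ hm _; exact: hm.
  apply: (AI _ Af).
  have -> : f1 `&` f2 = ((f1 `&` f2) `&` a) `|` ((f1 `&` f2) `&` ~` a).
    by rewrite -meetUr joinxC meetx1.
  apply: IU.
    apply: (Id _ _ I1); apply: leI2 => //; exact: leIl.
  apply: (Id _ _ I2); apply: leI2 => //; exact: leIr.
have uA : ultrafilter A.
  split; first by split.
  move=> G [fG nGbot] AG; apply/seteqP; split=> // g Gg.
  case: (Acompl g) => // Agn; exfalso; apply: nGbot.
  rewrite -(meetxC g); case: fG => _ hm _; apply: hm => //; exact: AG.
by exists (mkUlt uA).
Qed.

Definition phi a : set (Ult B) := [set x | val x a].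

Lemma phiU a b : phi (a `|` b) = (phi a `|` phi b)%classic.
Proof. by apply/seteqP; split=> x /=; rewrite /phi /= uf_joinE. Qed.

Lemma phiI a b : phi (a `&` b) = (phi a `&` phi b)%classic.
Proof. by apply/seteqP; split=> x /=; rewrite /phi /= uf_meetE. Qed.

Lemma phiC a : phi (~` a) = (~` phi a)%classic.
Proof. by apply/seteqP; split=> x /=; rewrite /phi /= uf_CE. Qed.

Lemma phi0 : phi \bot = set0.
Proof. by apply/seteqP; split=> x //; exact: uf_proper. Qed.

Lemma phiT : phi \top = setT.
Proof. by apply/seteqP; split=> x // _; exact: uf_top. Qed.

Lemma phi_le a b : (phi a `<=` phi b)%classic <-> a <= b.
Proof.
split; last by move=> ab x xa; exact: uf_up xa ab.
move=> h; apply: contrapT => nab.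
pose F := [set c | a <= c]; pose I := [set c | c <= b].
have fF : is_filter F.
  split; rewrite /F /= ?lex1 //.
    by move=> c e ac ae; rewrite lexI ac ae.
  by move=> c e ac ce; exact: le_trans ce.
have iI : ideal I.
  split; rewrite /I /= ?le0x //.
    by move=> c e cb eb; rewrite leUx cb eb.
  by move=> c e eb ce; exact: le_trans eb.
have [x [Fx xI]] := pft fF iI (fun c ac cb => nab (le_trans ac cb)).
apply: (xI b (h x (Fx a (lexx a)))); exact: lexx.
Qed.

Lemma phi_inj : injective phi.
Proof.
move=> a b e; apply: le_anti; apply/andP; split; apply/phi_le; rewrite e; exact: subset_refl.
Qed.

End UF.

Section Top.

Lemma closed_nbhsC {X : topologicalType} (R : set X) p :
  closed R -> ~ R p -> nbhs p (~` R).
Proof.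
move=> cR nRp; have := closed_openC cR; rewrite openE => h; exact: h.
Qed.

Lemma nbhsC_closed {X : topologicalType} (R : set X) :
  (forall p, ~ R p -> nbhs p (~` R)) -> closed R.
Proof.
move=> h; rewrite closedE => p np; apply: contrapT => nRp; apply: np.
exact: h.
Qed.

Lemma open_nbhs' {X : topologicalType} (A : set X) x : open A -> A x -> nbhs x A.
Proof. by rewrite openE => h /h. Qed.

Lemma nbhs_prodP {X Y : topologicalType} (x : X) (y : Y) (Q : set (X * Y)) :
  nbhs (x, y) Q <->
  exists P1 P2, [/\ nbhs x P1, nbhs y P2 & forall a b, P1 a -> P2 b -> Q (a, b)].
Proof.
split.
  case=> [[P1 P2] [/= h1 h2] hs]; exists P1, P2; split => // a b ha hb.
  exact: (hs (a, b)).
case=> P1 [P2 [h1 h2 hs]]; exists (P1, P2) => //; by move=> [a b] [/= ha hb]; apply: hs.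
Qed.

Lemma cover_fam {X : topologicalType} (K : set X) (C : set (set X)) (O : set X) :
  compact K -> C set0 -> (forall U V, C U -> C V -> C (U `|` V)) ->
  (forall x, K x -> exists V, [/\ C V, open V, V x & V `<=` O]) ->
  exists V, [/\ C V, K `<=` V & V `<=` O].
Proof.
move=> cK C0 CU hK.
pose F : set_system (set X) := [set Q | exists V0, [/\ C V0, V0 `<=` O &
   forall W, C W -> W `<=` O -> V0 `<=` W -> Q W]].
have FF : Filter F.
  apply: Build_Filter.
  - by exists set0; split => //.
  - move=> P Q [V1 [c1 o1 h1]] [V2 [c2 o2 h2]]; exists (V1 `|` V2); split.
    + exact: CU.
    + by move=> z [/o1|/o2].
    + move=> W cW oW sW; split.
        by apply: h1 => // z ?; apply: sW; left.
      by apply: h2 => // z ?; apply: sW; right.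
  - move=> P Q PQ [V0 [c0 o0 h0]]; exists V0; split => // W cW oW sW.
    exact/PQ/h0.
have := (compact_near_coveringP K).1 cK (set X) F (fun W x => W x) FF.
case.
- move=> x Kx; have [V [cV oV Vx VO]] := hK x Kx.
  exists (V, [set W | V `<=` W]).
    split => /=; first exact: open_nbhs' oV Vx.
    by exists V; split.
  by move=> [x' W] [/= Vx' VW]; apply: VW.
- move=> V0 [c0 o0 h0]; exists V0; split => //.
  by apply: h0 => //; exact: subset_refl.
Qed.

Lemma rimage_closed {X Y : topologicalType} (R : set (X * Y)) (K : set X) :
  closed R -> compact K -> closed (rimage R K).
Proof.
move=> cR cK; apply: nbhsC_closed => y ny.
have := (compact_near_coveringP K).1 cK Y (nbhs y) (fun i x => ~ R (x, i)) _.
move=> /(_ _) hc; apply: filterS (hc _); last first.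
- move=> x Kx.
  have /nbhs_prodP [P1 [P2 [h1 h2 hs]]] : nbhs (x, y) (~` R).
    by apply: closed_nbhsC => // Rxy; apply: ny; exists x.
  exists (P1, P2); first by split.
  by move=> [a b] [/= ha hb]; exact: hs.
- move=> b hb [a Ka Rab]; exact: hb a Ka Rab.
Qed.

Lemma rpreimage_closed {X Y : topologicalType} (R : set (X * Y)) (K : set Y) :
  closed R -> compact K -> closed [set x | exists2 y, K y & R (x, y)].
Proof.
move=> cR cK; apply: nbhsC_closed => x nx.
have := (compact_near_coveringP K).1 cK X (nbhs x) (fun i y => ~ R (i, y)) _.
move=> /(_ _) hc; apply: filterS (hc _); last first.
- move=> y Ky.
  have /nbhs_prodP [P1 [P2 [h1 h2 hs]]] : nbhs (x, y) (~` R).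
    by apply: closed_nbhsC => // Rxy; apply: nx; exists y.
  exists (P2, P1); first by split.
  by move=> [b a] [/= hb ha]; exact: hs.
- move=> a ha [b Kb Rab]; exact: ha b Kb Rab.
Qed.

Lemma stone_compact {X : topologicalType} (K : set X) :
  stone_space X -> closed K -> compact K.
Proof.
case=> cX _ _ cK; apply: (subclosed_compact cK cX); exact: subsetT.
Qed.

Lemma clopen_base {X : topologicalType} (O : set X) x :
  stone_space X -> open O -> O x -> exists V, [/\ clopen V, V x & V `<=` O].
Proof.
move=> sX oO Ox; have [_ _ zX] := sX.
have cK : compact (~` O) by apply: stone_compact => //; exact: open_closedC.
have hz : forall z, (~` O) z ->
    exists V, [/\ clopen V, open V, V z & V `<=` [set z | z <> x]].
  move=> z nz; have zx : z != x by apply/eqP => e; apply: nz; rewrite e.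
  have [U [cU Uz nUx]] := zX _ _ zx; exists U; split => //; first by case: cU.
  by move=> w Uw e; apply: nUx; rewrite -e.
have [W [cW KW Wx]] := cover_fam cK clopen0 (@clopenU X) hz.
exists (~` W); split.
- exact: clopenC.
- by move=> /Wx.
- by move=> z nWz; apply: contrapT => nOz; apply: nWz; apply: KW.
Qed.

Lemma clopen_between {X : topologicalType} (C O : set X) :
  stone_space X -> closed C -> open O -> C `<=` O ->
  exists V, [/\ clopen V, C `<=` V & V `<=` O].
Proof.
move=> sX cC oO CO.
apply: (cover_fam (stone_compact sX cC) clopen0 (@clopenU X)) => x Cx.
have [V [cV Vx VO]] := clopen_base sX oO (CO _ Cx).
by exists V; split => //; case: cV.
Qed.

End Top.

Lemma clopP {X : topologicalType} (U : Clop X) : clopen (clop_val U).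
Proof. by have /asboolP := clop_valP U. Qed.

Definition mkClop {X : topologicalType} (A : set X) (h : clopen A) : Clop X :=
  @ClopSet X A (asboolT h).

Lemma clop_le {X : topologicalType} (U V : Clop X) :
  (U <= V)%O <-> clop_val U `<=` clop_val V.
Proof. by split => /subsetPset. Qed.

Lemma clopC_val {X : topologicalType} (U : Clop X) :
  clop_val (~` U)%O = ~` clop_val U.
Proof. by []. Qed.

Lemma clop_ext {X : topologicalType} (U V : Clop X) :
  clop_val U = clop_val V -> U = V.
Proof. exact: val_inj. Qed.

Lemma relext {A B : Type} (T T' : A -> B -> Prop) :
  (forall a b, T a b <-> T' a b) -> T = T'.
Proof. by move=> h; apply: funext => a; apply: funext => b; apply: propext. Qed.

Lemma rimage_comp {X Y Z : Type} (R : set (X * Y)) (R' : set (Y * Z)) U :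
  rimage (rcomp R R') U = rimage R' (rimage R U).
Proof.
apply/seteqP; split.
  by move=> z [x Ux [y [/= Rxy Ryz]]]; exists y => //; exists x.
by move=> z [y [x Ux Rxy] Ryz]; exists x => //; exists y.
Qed.

Lemma rimage_sub {X Y : Type} (R : set (X * Y)) U U' : U `<=` U' -> rimage R U `<=` rimage R U'.
Proof. by move=> h y [x /h Ux Rxy]; exists x. Qed.

Section Rel.
Context {X Y Z : topologicalType}.

Lemma SR_sub (R : set (X * Y)) : subordination (SR R).
Proof.
split.
- split; first by move=> y [x].
  by [].
- move=> a b c h1 h2 y [x [Ax|Bx] Rxy]; [apply: h1|apply: h2]; by exists x.
- move=> a c e h1 h2 y yR; split; [exact: h1|exact: h2].
- move=> a b c e /clop_le ab h /clop_le ce y [x Ax Rxy].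
  by apply: ce; apply: h; exists x => //; exact: ab.
Qed.

Lemma SR_anti (R1 R2 : set (X * Y)) : R1 `<=` R2 -> brel_sub (SR R2) (SR R1).
Proof. by move=> s U V h y [x Ux R1xy]; apply: h; exists x => //; exact: s. Qed.

Lemma interp (R : set (X * Y)) (R' : set (Y * Z)) (U : Clop X) (W : Clop Z) :
  stone_space X -> stone_space Y -> stone_space Z -> closed R -> closed R' ->
  rimage R' (rimage R U) `<=` W ->
  exists V : Clop Y, rimage R U `<=` V /\ rimage R' V `<=` W.
Proof.
move=> sX sY sZ cR cR' h.
have cC : closed (rimage R U).
  apply: rimage_closed => //; apply: stone_compact => //; by case: (clopP U).
have cK : closed [set y | exists2 z, (~` clop_val W) z & R' (y, z)].
  apply: rpreimage_closed => //; apply: stone_compact => //.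
  by apply: open_closedC; case: (clopP W).
have CO : rimage R U `<=` ~` [set y | exists2 z, (~` clop_val W) z & R' (y, z)].
  by move=> y Cy [z nWz R'yz]; apply: nWz; apply: h; exists y.
have [V [cV CV VO]] := clopen_between sY cC (closed_openC cK) CO.
exists (mkClop cV); split => // z [y Vy R'yz]; apply: contrapT => nWz.
by apply: (VO _ Vy); exists z.
Qed.

Lemma SR_rcomp (R : set (X * Y)) (R' : set (Y * Z)) :
  stone_space X -> stone_space Y -> stone_space Z -> closed R -> closed R' ->
  SR (rcomp R R') = bcomp (SR R) (SR R').
Proof.
move=> sX sY sZ cR cR'; apply: relext => U W; split.
  rewrite /SR rimage_comp => h.
  have [V [h1 h2]] := interp sX sY sZ cR cR' h; by exists V.
case=> V [h1 h2]; rewrite /SR rimage_comp; apply: subset_trans h2.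
exact: rimage_sub h1.
Qed.

Lemma closed_sep (R : set (X * Y)) x y :
  stone_space X -> stone_space Y -> closed R -> ~ R (x, y) ->
  exists (U : Clop X) (V : Clop Y), [/\ clop_val U x, ~ clop_val V y & SR R U V].
Proof.
move=> sX sY cR nR.
have /nbhs_prodP [P1 [P2 [h1 h2 hs]]] := closed_nbhsC cR nR.
move: h2; rewrite nbhsE => -[B [oB By] BP2].
have [V0 [cV0 V0y V0B]] := clopen_base sY oB By.
have cK : closed [set a | exists2 b, V0 b & R (a, b)].
  by apply: rpreimage_closed => //; apply: stone_compact => //; case: cV0.
have nKx : ~ [set a | exists2 b, V0 b & R (a, b)] x.
  case=> b V0b Rxb; apply: (hs x b) => //; first exact: nbhs_singleton.
  exact/BP2/V0B.
have [U0 [cU0 U0x U0K]] := clopen_base sX (closed_openC cK) nKx.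
exists (mkClop cU0), (mkClop (@clopenC _ V0 set0 cV0)); split => //=.
move=> b [a U0a Rab] V0b; apply: (U0K _ U0a); by exists b.
Qed.

End Rel.

Section Fobj.
Context {X : topologicalType}.

Lemma F_obj (E : set (X * X)) :
  stone_space X -> closed_equiv E -> S5_subordination (SR E).
Proof.
move=> sX [cE Er Es Et]; split.
- exact: SR_sub.
- by move=> a b h; apply/clop_le => x ax; apply: h; exists x.
- move=> a b h; rewrite /SR !clopC_val => x [y nby Eyx] ax.
  apply: nby; apply: h; exists x => //; exact: Es.
- move=> a b h.
  have h' : rimage E (rimage E a) `<=` b.
    move=> z [y [x ax Exy] Eyz]; apply: h; exists x => //; exact: Et Eyz.
  have [V [h1 h2]] := interp sX sX sX cE cE h'; by exists V.
Qed.

End Fobj.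

Section Fmor.
Context {X Y : topologicalType}.

Lemma F_mor (E : set (X * X)) (E' : set (Y * Y)) (R : set (X * Y)) :
  stone_space X -> stone_space Y -> closed_equiv E -> closed_equiv E' ->
  compat_closed_rel E E' R -> compat_sub (SR E) (SR E') (SR R).
Proof.
move=> sX sY [cE _ _ _] [cE' _ _ _] [cR h1 h2]; split.
- exact: SR_sub.
- by rewrite -SR_rcomp // h1.
- by rewrite -SR_rcomp // h2.
Qed.

Lemma F_dag (R : set (X * Y)) : SR (rconv R) = bdag (SR R).
Proof.
apply: relext => V U; rewrite /bdag /SR !clopC_val; split.
- move=> h y [x nUx Rxy] Vy; apply: nUx; apply: h; by exists y.
- move=> h x [y Vy Rxy]; apply: contrapT => nUx; apply: (h y) => //.
  by exists x.
Qed.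

Definition Nrel (N : Clop X -> Clop Y -> Prop) : set (X * Y) :=
  [set p | forall U V, clop_val U p.1 -> N U V -> clop_val V p.2].

Lemma Nrel_closed N : closed (Nrel N).
Proof.
apply: nbhsC_closed => -[x y]; rewrite {1}/Nrel /= => /existsNP [U /existsNP [V /not_implyP [Ux /not_implyP [NUV nVy]]]].
apply/nbhs_prodP; exists (clop_val U), (~` clop_val V); split.
- by apply: open_nbhs' => //; case: (clopP U).
- by apply: open_nbhs' => //; apply: closed_openC; case: (clopP V).
- by move=> a b Ua nVb h; apply: nVb; exact: (h U V Ua NUV).
Qed.

Lemma Nrel_full N : stone_space X -> stone_space Y -> subordination N ->
  SR (Nrel N) = N.
Proof.
move=> sX sY [[N00 N11] NU NI NS]; apply: relext => U W; split; last first.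
  by move=> h y [x Ux hx]; exact: (hx U W Ux h).
move=> h; apply: contrapT => nUW.
have NUT : N U \top%O by apply: (NS _ _ _ _ _ N11) => //; exact: lex1.
have [y [nWy hy]] : exists y, ~ clop_val W y /\ forall V, N U V -> clop_val V y.
  apply: contrapT => hn.
  have cK : compact (~` clop_val W).
    by apply: stone_compact => //; apply: open_closedC; case: (clopP W).
  have := @cover_fam Y _ [set A | exists V, N U V /\ A = ~` clop_val V] setT cK.
  case.
  - exists \top%O; split => //; apply/seteqP; split => z //=.
    by move=> hh; apply: hh; exact: I.
  - move=> _ _ [V1 [h1 ->]] [V2 [h2 ->]]; exists (V1 `&` V2)%O; split.
      exact: NI.
    by rewrite /= setCI.
  - move=> z nWz.
    have : ~ (forall V, N U V -> clop_val V z) by move=> hz; apply: hn; exists z.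
    move=> /existsNP [V /not_implyP [NUV nVz]].
    exists (~` clop_val V); split => //; first by exists V.
    by apply: closed_openC; case: (clopP V).
  - move=> _ [[V [NUV ->]] KV _]; apply: nUW.
    apply: (NS _ _ _ _ (lexx U) NUV); apply/clop_le => z Vz.
    by apply: contrapT => nWz; exact: KV nWz Vz.
have [x [Ux hx]] : exists x, clop_val U x /\
    forall U' V, clop_val U' x -> N U' V -> clop_val V y.
  apply: contrapT => hn.
  have cK : compact (clop_val U) by apply: stone_compact => //; case: (clopP U).
  have := @cover_fam X _ [set A | exists U' V, [/\ N U' V, ~ clop_val V y & A = clop_val U']] setT cK.
  case.
  - by exists \bot%O, \bot%O; split.
  - move=> _ _ [U1 [V1 [h1 n1 ->]]] [U2 [V2 [h2 n2 ->]]].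
    exists (U1 `|` U2)%O, (V1 `|` V2)%O; split => //.
    + apply: NU.
        by apply: (NS _ _ _ _ (lexx _) h1); exact: leUl.
      by apply: (NS _ _ _ _ (lexx _) h2); exact: leUr.
    + by case.
  - move=> z Uz.
    have : ~ (forall U' V, clop_val U' z -> N U' V -> clop_val V y).
      by move=> hz; apply: hn; exists z.
    move=> /existsNP [U' /existsNP [V /not_implyP [U'z /not_implyP [NUV nVy]]]].
    exists (clop_val U'); split => //; first by exists U', V.
    by case: (clopP U').
  - move=> _ [[U' [V [NUV nVy ->]]] KU _]; apply: nVy; apply: hy.
    by apply: (NS _ _ _ _ _ NUV (lexx V)); apply/clop_le.
by apply: nWy; apply: h; exists x.
Qed.

End Fmor.

Section UltTop.
Context {d : Order.disp_t} (B : ctbDistrLatticeType d).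
Local Notation phi := (@phi d B).

Lemma phi_open (a : B) : open (phi a).
Proof.
rewrite /open /=; exists [set phi a]; last exact: bigcup_set1.
move=> _ ->; apply: finI_from1; by exists a.
Qed.

Lemma phi_clopen (a : B) : clopen (phi a).
Proof.
split; first exact: phi_open.
by rewrite -openC -phiC; exact: phi_open.
Qed.

Lemma ult_nbhs (U : set (Ult B)) x : open U -> U x ->
  exists a, val x a /\ phi a `<=` U.
Proof.
case=> D' sD' e; rewrite -e => -[A D'A Ax].
have : finI_from (@ult_basic d B) id A := sD' _ D'A.
rewrite filterI_iter_finI => -[n _ hn].
suff h : forall A, filterI_iter (id @` @ult_basic d B) n A -> A x ->
    exists a, val x a /\ phi a `<=` A.
  have [a [xa sa]] := h A hn Ax; exists a; split => // y /sa Ay; by exists A.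
elim: n {A D'A Ax hn} => [|n IH] A /=.
  case=> [-> _|[_ [a _ <-] <-] xa].
    by exists \top%O; split; [exact: uf_top|].
  by exists a; split.
case=> P hP [Q hQ <-] [Px Qx].
have [a [xa sa]] := IH _ hP Px; have [b [xb sb]] := IH _ hQ Qx.
exists (a `&` b)%O; split; first exact: uf_meet.
by rewrite phiI; move=> y [/sa ? /sb ?].
Qed.

Lemma ult_nbhsP (P : set (Ult B)) (x : Ult B) : nbhs x P -> exists a, val x a /\ phi a `<=` P.
Proof.
rewrite nbhsE => -[O [oO Ox] OP]; have [a [xa sa]] := ult_nbhs oO Ox.
by exists a; split => // y /sa /OP.
Qed.

Lemma phi_nbhs (a : B) (x : Ult B) : val x a -> nbhs x (phi a).
Proof. by move=> xa; apply: open_nbhs' => //; exact: phi_open. Qed.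

Lemma ult_compact : compact [set: Ult B].
Proof.
move=> F PF _.
pose x0 := [set a : B | F (phi a)].
have fx0 : is_filter x0.
  split; rewrite /x0 /=.
  - by rewrite phiT; exact: filterT.
  - by move=> a b ha hb; rewrite phiI; exact: filterI.
  - by move=> a b ha ab; apply: filterS ha; apply/phi_le.
have iI : ideal [set a : B | (a <= \bot)%O].
  split => /=.
  - exact: lexx.
  - by move=> a b ha hb; rewrite leUx ha hb.
  - by move=> a b hb ab; exact: le_trans hb.
have disj : forall a, x0 a -> ~ [set a : B | (a <= \bot)%O] a.
  move=> a Fa ab; apply: (@filter_not_empty _ F PF).
  suff <- : phi a = set0 by [].
  apply/seteqP; split => // y ya; apply: (uf_proper (x := y)).
  exact: uf_up ya ab.
have [x [x0x xI]] := pft fx0 iI disj.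
exists x; split => //.
move=> Q P FQ /ult_nbhsP [a [xa sa]].
apply: contrapT => hn.
have : F (phi (~` a)%O).
  rewrite phiC; apply: filterS FQ => y Qy ay; apply: hn; exists y; split => //.
  exact: sa.
by move=> /x0x /uf_CE.
Qed.

Lemma ult_sep (x y : Ult B) : x != y -> exists a, val x a /\ ~ val y a.
Proof.
move=> /eqP nxy; apply: contrapT => hn; apply: nxy; apply: uf_eq => a xa.
by apply: contrapT => nya; apply: hn; exists a.
Qed.

Lemma ult_stone : stone_space (Ult B).
Proof.
split.
- exact: ult_compact.
- move=> p q cpq; apply: contrapT => /eqP npq.
  have [a [pa nqa]] := ult_sep npq.
  have [z [z1 z2]] := cpq _ _ (phi_nbhs pa) (phi_nbhs ((uf_CE _ _).2 nqa)).
  by apply: (uf_nC z1).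
- move=> x y nxy; have [a [xa nya]] := ult_sep nxy.
  by exists (phi a); split => //; exact: phi_clopen.
Qed.

Lemma clop_phi (U : set (Ult B)) : clopen U -> exists b, U = phi b.
Proof.
move=> [oU cU].
have cK : compact U by apply: stone_compact => //; exact: ult_stone.
have C0 : [set A | exists b, A = phi b] set0 by exists \bot%O; rewrite phi0.
have CU : forall V W, [set A | exists b, A = phi b] V ->
    [set A | exists b, A = phi b] W -> [set A | exists b, A = phi b] (V `|` W).
  by move=> _ _ [a ->] [b ->]; exists (a `|` b)%O; rewrite phiU.
have hx : forall x, U x -> exists V, [/\ [set A | exists b, A = phi b] V, open V,
    V x & V `<=` U].
  move=> x Ux; have [a [xa sa]] := ult_nbhs oU Ux.
  by exists (phi a); split => //; [by exists a | exact: phi_open].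
have [V [[b ->] UV VU]] := cover_fam cK C0 CU hx.
by exists b; apply/seteqP; split.
Qed.

End UltTop.

Section RSsec.
Context {dA dB : Order.disp_t} {A : ctbDistrLatticeType dA} {B : ctbDistrLatticeType dB}.
Implicit Types (T : A -> B -> Prop).

Lemma RS_closed T : closed (RS T).
Proof.
apply: nbhsC_closed => -[x y] h.
have [b [[a xa Tab] nyb]] : exists b, (exists2 a, val x a & T a b) /\ ~ val y b.
  apply: contrapT => hn; apply: h => b hb; apply: contrapT => nyb.
  by apply: hn; exists b.
apply/nbhs_prodP; exists (phi a), (phi (~` b)%O); split.
- exact: phi_nbhs.
- by apply: phi_nbhs; apply/uf_CE.
- move=> x' y' x'a y'b hR; apply: (uf_nC _ y'b); apply: hR; by exists a.
Qed.

Lemma sub_top T a : subordination T -> T a \top%O.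
Proof. by case=> [[_ h11] _ _ hS]; apply: (hS _ _ _ _ _ h11) => //; exact: lex1. Qed.

Lemma RS_key T a b : subordination T ->
  (forall x y, RS T (x, y) -> val x a -> val y b) -> T a b.
Proof.
move=> sT h; apply: contrapT => nT.
case: (sT) => [[T00 T11] TU TI TS].
have fTa : is_filter [set c | T a c].
  split => /=.
  - exact: sub_top.
  - by move=> c e h1 h2; exact: TI.
  - by move=> c e h1 ce; exact: (TS _ _ _ _ (lexx a) h1 ce).
have iI : ideal [set c : B | (c <= b)%O].
  split => /=.
  - exact: le0x.
  - by move=> c e h1 h2; rewrite leUx h1 h2.
  - by move=> c e h1 ce; exact: le_trans h1.
have [y [Tay yI]] := pft fTa iI (fun c Tac cb => nT (TS _ _ _ _ (lexx a) Tac cb)).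
have fa : is_filter [set c : A | (a <= c)%O].
  split => /=.
  - exact: lex1.
  - by move=> c e h1 h2; rewrite lexI h1 h2.
  - by move=> c e h1 ce; exact: le_trans ce.
have iJ : ideal [set c | exists2 e, ~ val y e & T c e].
  split => /=.
  - by exists \bot%O => //; exact: uf_proper.
  - move=> c1 c2 [e1 n1 h1] [e2 n2 h2]; exists (e1 `|` e2)%O.
      by move=> /uf_joinE [].
    apply: TU.
      by apply: (TS _ _ _ _ (lexx _) h1); exact: leUl.
    by apply: (TS _ _ _ _ (lexx _) h2); exact: leUr.
  - by move=> c e [f nf h1] ce; exists f => //; exact: (TS _ _ _ _ ce h1 (lexx f)).
have disj : forall c, [set c : A | (a <= c)%O] c -> ~ [set c | exists2 e, ~ val y e & T c e] c.
  move=> c /= ac [e nye Tce]; apply: nye; apply: Tay => /=.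
  exact: (TS _ _ _ _ ac Tce (lexx e)).
have [x [ax xJ]] := pft fa iJ disj.
apply: (yI b); last exact: lexx.
apply: (h x y); last exact: (ax a (lexx a)).
move=> e [c xc Tce]; apply: contrapT => nye; apply: (xJ c xc); by exists e.
Qed.

Lemma RS_phi T a b : subordination T ->
  (SR (RS T) (mkClop (phi_clopen a)) (mkClop (phi_clopen b)) <-> T a b).
Proof.
move=> sT; split.
  move=> h; apply: RS_key => // x y Rxy xa; apply: h; by exists x.
by move=> Tab y [x xa Rxy]; apply: Rxy; exists a.
Qed.

End RSsec.

Section RScomp.
Context {dA dB dC : Order.disp_t} {A : ctbDistrLatticeType dA}
  {B : ctbDistrLatticeType dB} {C : ctbDistrLatticeType dC}.

Lemma RS_comp (T : A -> B -> Prop) (T' : B -> C -> Prop) :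
  subordination T -> subordination T' ->
  RS (bcomp T T') = rcomp (RS T) (RS T').
Proof.
move=> sT sT'; apply/seteqP; split => -[x z] /=; last first.
  case=> y [/= hxy hyz] c [a xa [b [Tab T'bc]]]; apply: hyz; exists b => //.
  by apply: hxy; exists a.
move=> hxz.
case: (sT) => [[T00 T11] TU TI TS]; case: (sT') => [[U00 U11] UU UI US].
have fF : is_filter [set b | exists2 a, val x a & T a b].
  split => /=.
  - by exists \top%O; [exact: uf_top | exact: T11].
  - move=> b1 b2 [a1 x1 h1] [a2 x2 h2]; exists (a1 `&` a2)%O; first exact: uf_meet.
    apply: TI.
      by apply: (TS _ _ _ _ _ h1 (lexx _)); exact: leIl.
    by apply: (TS _ _ _ _ _ h2 (lexx _)); exact: leIr.
  - by move=> b1 b2 [a xa h] bb; exists a => //; exact: (TS _ _ _ _ (lexx a) h bb).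
have iJ : ideal [set b | exists2 c, ~ val z c & T' b c].
  split => /=.
  - by exists \bot%O => //; exact: uf_proper.
  - move=> c1 c2 [e1 n1 h1] [e2 n2 h2]; exists (e1 `|` e2)%O.
      by move=> /uf_joinE [].
    apply: UU.
      by apply: (US _ _ _ _ (lexx _) h1); exact: leUl.
    by apply: (US _ _ _ _ (lexx _) h2); exact: leUr.
  - by move=> c e [f nf h1] ce; exists f => //; exact: (US _ _ _ _ ce h1 (lexx f)).
have disj : forall b, [set b | exists2 a, val x a & T a b] b ->
    ~ [set b | exists2 c, ~ val z c & T' b c] b.
  move=> b [a xa Tab] [c nzc T'bc]; apply: nzc; apply: hxz.
  by exists a => //; exists b.
have [y [Fy yJ]] := pft fF iJ disj.
exists y; split => /=.
  exact: Fy.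
move=> c [b yb T'bc]; apply: contrapT => nzc; apply: (yJ b yb); by exists c.
Qed.

End RScomp.

Section Gsec.
Context {d : Order.disp_t} {B : ctbDistrLatticeType d}.

Lemma RS_refl (S : B -> B -> Prop) x : S5_subordination S -> RS S (x, x).
Proof. by case=> _ S5 _ _ b [a xa Sab]; apply: uf_up xa (S5 _ _ Sab). Qed.

Lemma G_obj (S : B -> B -> Prop) :
  S5_subordination S -> stone_space (Ult B) /\ closed_equiv (RS S).
Proof.
move=> hS; split; first exact: ult_stone.
have [sS S5 S6 S7] := hS.
split.
- exact: RS_closed.
- by move=> x; exact: RS_refl.
- move=> x y hxy c [b yb Sbc]; apply: contrapT => nxc.
  have := S6 _ _ Sbc => Snc; apply: (uf_nC yb); apply: hxy.
  by exists (~` c)%O => //; apply/uf_CE.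
- move=> x y z hxy hyz c [a xa Sac]; have [e [Sae Sec]] := S7 _ _ Sac.
  apply: hyz; exists e => //; apply: hxy; by exists a.
Qed.

End Gsec.

Lemma G_mor {dA dB : Order.disp_t} {A : ctbDistrLatticeType dA} {B : ctbDistrLatticeType dB}
  (S : A -> A -> Prop) (S' : B -> B -> Prop) (T : A -> B -> Prop) :
  S5_subordination S -> S5_subordination S' -> compat_sub S S' T ->
  compat_closed_rel (RS S) (RS S') (RS T).
Proof.
move=> [sS _ _ _] [sS' _ _ _] [sT h1 h2]; split.
- exact: RS_closed.
- by rewrite -RS_comp // h1.
- by rewrite -RS_comp // h2.
Qed.

Lemma F_meet {X Y : topologicalType} (E : set (X * X)) (E' : set (Y * Y)) (R1 R2 M : set (X * Y)) :
  stone_space X -> stone_space Y -> closed_equiv E -> closed_equiv E' ->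
  compat_closed_rel E E' R1 -> compat_closed_rel E E' R2 ->
  is_meet_ccr E E' R1 R2 M ->
  is_meet_csub (SR E) (SR E') (SR R1) (SR R2) (SR M).
Proof.
move=> sX sY hE hE' c1 c2 [cM M1 M2 Mu]; split.
- exact: F_mor.
- exact: SR_anti.
- exact: SR_anti.
move=> N [sN hN1 hN2] h1 h2.
have [cE Er _ _] := hE; have [cE' Er' _ _] := hE'.
have cN : compat_closed_rel E E' (Nrel N).
  split; first exact: Nrel_closed.
  - apply/seteqP; split => -[x y] /=; last by move=> h; exists x; split.
    case=> x' [/= Exx' hN] U V Ux NUV.
    rewrite -hN1 in NUV; case: NUV => W [SUW NWV].
    by apply: (hN W V) => //; apply: SUW; exists x.
  - apply/seteqP; split => -[x y] /=; last by move=> h; exists y; split.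
    case=> y' [/= hN E'y'y] U V Ux NUV.
    rewrite -hN2 in NUV; case: NUV => W [NUW SWV].
    by apply: SWV; exists y' => //; exact: (hN U W).
have s1 : Nrel N `<=` R1.
  case: c1 => cR1 _ _.
  move=> [x y] hN; apply: contrapT => nR.
  have [U [V [Ux nVy SUV]]] := closed_sep sX sY cR1 nR.
  by apply: nVy; apply: (hN U V) => //; exact: h1.
have s2 : Nrel N `<=` R2.
  case: c2 => cR2 _ _.
  move=> [x y] hN; apply: contrapT => nR.
  have [U [V [Ux nVy SUV]]] := closed_sep sX sY cR2 nR.
  by apply: nVy; apply: (hN U V) => //; exact: h2.
have := SR_anti (Mu _ cN s1 s2); rewrite Nrel_full //.
Qed.

Section Pt.
Context {X : topologicalType}.
Local Open Scope order_scope.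

Lemma pt_uf (x : X) : ultrafilter [set U : Clop X | clop_val U x].
Proof.
have fF : is_filter [set U : Clop X | clop_val U x].
  split => //=; move=> U V Ux /clop_le h; exact: h.
split; first by split.
move=> G [[GT GI GS] nG] sG; apply/seteqP; split => // U GU.
apply: contrapT => nUx; apply: nG.
rewrite -(meetxC U); apply: GI => //; apply: sG => /=; exact: nUx.
Qed.

Definition pt (x : X) : Ult (Clop X) := mkUlt (pt_uf x).

Lemma ptE (x : X) U : val (pt x) U = clop_val U x.
Proof. by []. Qed.

Lemma pt_surj (u : Ult (Clop X)) : stone_space X -> exists x, u = pt x.
Proof.
move=> sX.
have [x hx] : exists x, forall U, val u U -> clop_val U x.
  apply: contrapT => hn.
  have cK : compact [set: X] by case: sX.
  have C0 : [set A | exists V : Clop X, ~ val u V /\ A = clop_val V] set0.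
    by exists \bot; split => //; exact: uf_proper.
  have CU : forall V W, [set A | exists V : Clop X, ~ val u V /\ A = clop_val V] V ->
      [set A | exists V : Clop X, ~ val u V /\ A = clop_val V] W ->
      [set A | exists V : Clop X, ~ val u V /\ A = clop_val V] (V `|` W)%classic.
    move=> _ _ [V [nV ->]] [W [nW ->]]; exists (V `|` W); split => //.
    by move=> /uf_joinE [].
  have hz : forall z, [set: X] z -> exists V, [/\ [set A | exists V : Clop X,
      ~ val u V /\ A = clop_val V] V, open V, V z & V `<=` [set: X]].
    move=> z _.
    have : ~ (forall U, val u U -> clop_val U z) by move=> h; apply: hn; exists z.
    move=> /existsNP [U /not_implyP [uU nUz]].
    exists (clop_val (~` U)); split => //.
    + by exists (~` U); split => //; apply: uf_nC.
    + by case: (clopP (~` U)).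
  have [V [[W [nW ->]] TW _]] := cover_fam cK C0 CU hz.
  by apply: nW; apply: (uf_up (uf_top u)); apply/clop_le => z _; exact: TW.
exists x; apply: uf_eq => U uU; exact: hx.
Qed.

End Pt.

Lemma RS_SR_pt {X Y : topologicalType} (R : set (X * Y)) x y :
  stone_space X -> stone_space Y -> closed R ->
  RS (SR R) (pt x, pt y) <-> R (x, y).
Proof.
move=> sX sY cR; split; last first.
  by move=> Rxy V [U Ux SUV]; apply: SUV; exists x.
move=> h; apply: contrapT => nR.
have [U [V [Ux nVy SUV]]] := closed_sep sX sY cR nR.
by apply: nVy; apply: h; exists U.
Qed.

Definition alpha (X : topologicalType) (E : set (X * X)) : set (X * Ult (Clop X)) :=
  [set p | RS (SR E) (pt p.1, p.2)].
Definition beta (X : topologicalType) (E : set (X * X)) : set (Ult (Clop X) * X) :=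
  [set p | RS (SR E) (p.1, pt p.2)].

Section Nat1.
Context {X : topologicalType} (E : set (X * X)).
Hypotheses (sX : stone_space X) (hE : closed_equiv E).

Lemma RSE x y : RS (SR E) (pt x, pt y) <-> E (x, y).
Proof. by case: hE => cE _ _ _; exact: RS_SR_pt. Qed.

Lemma alpha_closed : closed (alpha E).
Proof.
apply: nbhsC_closed => -[x u] h.
have [V [[U Ux SUV] nuV]] : exists V, (exists2 U : Clop X, clop_val U x & SR E U V) /\ ~ val u V.
  apply: contrapT => hn; apply: h => V hV; apply: contrapT => nuV.
  by apply: hn; exists V.
apply/nbhs_prodP; exists (clop_val U), (phi (~` V)%O); split.
- by apply: open_nbhs' => //; case: (clopP U).
- by apply: phi_nbhs; apply/uf_CE.
- move=> x' u' Ux' u'V hR; apply: (uf_nC _ u'V); apply: hR; by exists U.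
Qed.

Lemma beta_closed : closed (beta E).
Proof.
apply: nbhsC_closed => -[u x] h.
have [V [[U uU SUV] nVx]] : exists V, (exists2 U, val u U & SR E U V) /\ ~ clop_val V x.
  apply: contrapT => hn; apply: h => V hV; apply: contrapT => nVx.
  by apply: hn; exists V.
apply/nbhs_prodP; exists (phi U), (~` clop_val V); split.
- exact: phi_nbhs.
- by apply: open_nbhs' => //; apply: closed_openC; case: (clopP V).
- move=> u' x' u'U nVx' hR; apply: nVx'; apply: hR; by exists U.
Qed.

Lemma Nat1_obj :
  [/\ compat_closed_rel E (RS (SR E)) (alpha E),
      compat_closed_rel (RS (SR E)) E (beta E),
      rcomp (alpha E) (beta E) = E &
      rcomp (beta E) (alpha E) = RS (SR E)].
Proof.
have [cE Er Es Et] := hE.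
have S5E := F_obj sX hE.
have ptS := fun u => pt_surj u sX.
split.
- split; first exact: alpha_closed.
  + apply/seteqP; split => -[x u] /=; last by move=> h; exists x; split.
    case=> x' [/= Exx']; have [y ->] := ptS u; rewrite /alpha /= !RSE => Ex'y.
    exact: Et Ex'y.
  + apply/seteqP; split => -[x u] /=; last first.
      by move=> h; exists u; split => //; exact: RS_refl.
    case=> u' [/=]; have [y ->] := ptS u'; have [z ->] := ptS u.
    by rewrite /alpha /= !RSE; exact: Et.
- split; first exact: beta_closed.
  + apply/seteqP; split => -[u x] /=; last first.
      by move=> h; exists u; split => //; exact: RS_refl.
    case=> u' [/=]; have [y ->] := ptS u'; have [z ->] := ptS u.
    by rewrite /beta /= !RSE => h1 h2; exact: (Et _ _ _ h1 h2).
  + apply/seteqP; split => -[u x] /=; last by move=> h; exists x; split.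
    case=> x' [/=]; have [y ->] := ptS u; rewrite /beta /= !RSE; exact: Et.
- apply/seteqP; split => -[x x'] /=.
    case=> u [/=]; have [y ->] := ptS u; rewrite /alpha /beta /= !RSE; exact: Et.
  by move=> h; exists (pt x'); split; rewrite /alpha /beta /= RSE //; exact: Er.
- apply/seteqP; split => -[u u'] /=; have [y ->] := ptS u; have [y' ->] := ptS u'.
    by case=> x [/=]; rewrite /alpha /beta /= !RSE => h1 h2; exact: (Et _ _ _ h1 h2).
  by rewrite RSE => h; exists y; split; rewrite /alpha /beta /= RSE //; exact: Er.
Qed.

End Nat1.

Lemma Nat1_mor {X Y : topologicalType} (E : set (X * X)) (E' : set (Y * Y)) (R : set (X * Y)) :
  stone_space X -> stone_space Y -> closed_equiv E -> closed_equiv E' ->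
  compat_closed_rel E E' R ->
  rcomp (alpha E) (RS (SR R)) = rcomp R (alpha E').
Proof.
move=> sX sY hE hE' [cR hR1 hR2].
have [cE Er Es Et] := hE; have [cE' Er' Es' Et'] := hE'.
apply/seteqP; split => -[x v] /=.
  case=> u [/=]; have [y ->] := pt_surj u sX; have [z ->] := pt_surj v sY.
  rewrite /alpha /= RSE // RS_SR_pt // => Exy Ryz.
  exists z; split; rewrite /alpha /= ?RSE //.
  by rewrite -hR1; exists y.
have [z ->] := pt_surj v sY.
case=> y [/= Rxy]; rewrite /alpha /= RSE // => E'yz.
exists (pt x); split; rewrite /alpha /= ?RSE ?RS_SR_pt //.
by rewrite -hR2; exists y.
Qed.

Definition Phi {d : Order.disp_t} {B : ctbDistrLatticeType d} (b : B) : Clop (Ult B) :=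
  mkClop (phi_clopen b).

Section Nat2.
Context {d : Order.disp_t} {B : ctbDistrLatticeType d}.
Local Open Scope order_scope.

Lemma Phi_surj (U : Clop (Ult B)) : exists b : B, U = Phi b.
Proof.
have [b e] := clop_phi (clopP U); exists b; apply: clop_ext; exact: e.
Qed.

Lemma Phi0 : Phi (\bot : B) = \bot.
Proof. by apply: clop_ext; rewrite /= phi0. Qed.
Lemma Phi1 : Phi (\top : B) = \top.
Proof. by apply: clop_ext; rewrite /= phiT. Qed.
Lemma PhiU (a b : B) : Phi (a `|` b) = Phi a `|` Phi b.
Proof. by apply: clop_ext; rewrite /= phiU. Qed.
Lemma PhiI (a b : B) : Phi (a `&` b) = Phi a `&` Phi b.
Proof. by apply: clop_ext; rewrite /= phiI. Qed.
Lemma Phi_le (a b : B) : Phi a <= Phi b <-> a <= b.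
Proof. by rewrite clop_le; exact: phi_le. Qed.

End Nat2.

Definition eps (d : Order.disp_t) (B : ctbDistrLatticeType d) (S : B -> B -> Prop) :
  Clop (Ult B) -> B -> Prop := fun U b => SR (RS S) U (Phi b).
Definition delta (d : Order.disp_t) (B : ctbDistrLatticeType d) (S : B -> B -> Prop) :
  B -> Clop (Ult B) -> Prop := fun b U => SR (RS S) (Phi b) U.

Section Nat2b.
Local Open Scope order_scope.

Lemma SPhi {d : Order.disp_t} {B : ctbDistrLatticeType d} {d' : Order.disp_t}
  {B' : ctbDistrLatticeType d'} (T : B -> B' -> Prop) a b :
  subordination T -> SR (RS T) (Phi a) (Phi b) <-> T a b.
Proof. exact: RS_phi. Qed.

Lemma S5_trans {d : Order.disp_t} {B : ctbDistrLatticeType d} (S : B -> B -> Prop) a b c :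
  S5_subordination S -> S a b -> S b c -> S a c.
Proof.
by move=> [[_ _ _ hS] S5 _ _] h1 h2; apply: (hS _ _ _ _ (lexx a) h1); exact: S5.
Qed.

Lemma Nat2_obj {d : Order.disp_t} {B : ctbDistrLatticeType d} (S : B -> B -> Prop) :
  S5_subordination S ->
  [/\ compat_sub (SR (RS S)) S (eps S),
      compat_sub S (SR (RS S)) (delta S),
      bcomp (eps S) (delta S) = SR (RS S) &
      bcomp (delta S) (eps S) = S].
Proof.
move=> hS; have sS := hS; case: sS => sS _ _ S7.
have [[S00 S11] SU SI SS] := sS.
have eP a b : eps S (Phi a) b <-> S a b by rewrite /eps SPhi.
have dP a b : delta S a (Phi b) <-> S a b by rewrite /delta SPhi.
have hP a b : SR (RS S) (Phi a) (Phi b) <-> S a b by rewrite SPhi.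
split.
- split.
  + split.
    * by split; [rewrite -Phi0 eP | rewrite -Phi1 eP].
    * move=> U V c; have [a ->] := Phi_surj U; have [b ->] := Phi_surj V.
      by rewrite -PhiU !eP; exact: SU.
    * move=> U c e; have [a ->] := Phi_surj U; rewrite !eP; exact: SI.
    * move=> U V c e; have [a ->] := Phi_surj U; have [b ->] := Phi_surj V.
      by rewrite !eP Phi_le; exact: SS.
  + apply: relext => U b; have [a ->] := Phi_surj U; rewrite eP; split.
      case=> V; have [c ->] := Phi_surj V; case=> h1; rewrite hP in h1; rewrite eP.
      exact: S5_trans.
    by move=> /S7 [c [h1 h2]]; exists (Phi c); rewrite hP eP.
  + apply: relext => U b; have [a ->] := Phi_surj U; rewrite eP; split.
      by case=> c [h1 h2]; rewrite eP in h1; exact: S5_trans h2.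
    by move=> /S7 [c [h1 h2]]; exists c; rewrite eP.
- split.
  + split.
    * by split; [rewrite -Phi0 dP | rewrite -Phi1 dP].
    * move=> a b V; have [c ->] := Phi_surj V; rewrite !dP; exact: SU.
    * move=> a V W; have [b ->] := Phi_surj V; have [c ->] := Phi_surj W.
      by rewrite -PhiI !dP; exact: SI.
    * move=> a b V W ab; have [c ->] := Phi_surj V; have [e ->] := Phi_surj W.
      by rewrite !dP Phi_le; exact: SS.
  + apply: relext => a U; have [b ->] := Phi_surj U; rewrite dP; split.
      by case=> c [h1]; rewrite dP => h2; exact: S5_trans h2.
    by move=> /S7 [c [h1 h2]]; exists c; rewrite dP.
  + apply: relext => a U; have [b ->] := Phi_surj U; rewrite dP; split.
      case=> V; have [c ->] := Phi_surj V; case=> h1; rewrite dP in h1; rewrite hP => h2.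
      exact: S5_trans h2.
    by move=> /S7 [c [h1 h2]]; exists (Phi c); rewrite dP hP.
- apply: relext => U W; have [a ->] := Phi_surj U; have [c ->] := Phi_surj W.
  rewrite hP; split.
    by case=> b [h1 h2]; rewrite eP in h1; rewrite dP in h2; exact: S5_trans h2.
  by move=> /S7 [b [h1 h2]]; exists b; rewrite eP dP.
- apply: relext => a b; split.
    by case=> V; have [c ->] := Phi_surj V; case=> h1; rewrite dP in h1; rewrite eP => h2; exact: S5_trans h2.
  by move=> /S7 [c [h1 h2]]; exists (Phi c); rewrite dP eP.
Qed.

Lemma Nat2_mor {dA dB : Order.disp_t} {A : ctbDistrLatticeType dA} {B : ctbDistrLatticeType dB}
  (S : A -> A -> Prop) (S' : B -> B -> Prop) (T : A -> B -> Prop) :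
  S5_subordination S -> S5_subordination S' -> compat_sub S S' T ->
  bcomp (SR (RS T)) (eps S') = bcomp (eps S) T.
Proof.
move=> [sS _ _ _] [sS' _ _ _] [sT h1 h2].
apply: relext => U b; have [a ->] := Phi_surj U; split.
  case=> V; have [c ->] := Phi_surj V; case=> hT hS'.
  rewrite /eps /= SPhi // in hS'; rewrite SPhi // in hT.
  have hab : T a b by rewrite -h2; exists c.
  have : bcomp S T a b by rewrite h1.
  by case=> e [Sae Teb]; exists e; split => //; rewrite /eps /= SPhi.
case=> c [hS hT]; rewrite /eps /= SPhi // in hS.
have hab : T a b by rewrite -h1; exists c.
have : bcomp T S' a b by rewrite h2.
by case=> e [Tae S'eb]; exists (Phi e); rewrite /eps /= !SPhi.
Qed.

End Nat2b.

Theorem theorem3p8 :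
  (* F is well defined on objects *)
  (forall (X : topologicalType) (E : set (X * X)),
      stone_space X -> closed_equiv E -> S5_subordination (SR E)) /\
  (* F is well defined on morphisms *)
  (forall (X Y : topologicalType) (E : set (X * X)) (E' : set (Y * Y)) (R : set (X * Y)),
      stone_space X -> stone_space Y -> closed_equiv E -> closed_equiv E' ->
      compat_closed_rel E E' R -> compat_sub (SR E) (SR E') (SR R)) /\
  (* F preserves composition (identities are preserved by definition: F(E) = S_E) *)
  (forall (X Y Z : topologicalType) (E : set (X * X)) (E' : set (Y * Y)) (E'' : set (Z * Z))
      (R : set (X * Y)) (R' : set (Y * Z)),
      stone_space X -> stone_space Y -> stone_space Z ->
      closed_equiv E -> closed_equiv E' -> closed_equiv E'' ->
      compat_closed_rel E E' R -> compat_closed_rel E' E'' R' ->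
      SR (rcomp R R') = bcomp (SR R) (SR R')) /\
  (* F preserves binary meets of morphisms *)
  (forall (X Y : topologicalType) (E : set (X * X)) (E' : set (Y * Y)) (R1 R2 M : set (X * Y)),
      stone_space X -> stone_space Y -> closed_equiv E -> closed_equiv E' ->
      compat_closed_rel E E' R1 -> compat_closed_rel E E' R2 ->
      is_meet_ccr E E' R1 R2 M ->
      is_meet_csub (SR E) (SR E') (SR R1) (SR R2) (SR M)) /\
  (* F commutes with daggers *)
  (forall (X Y : topologicalType) (E : set (X * X)) (E' : set (Y * Y)) (R : set (X * Y)),
      stone_space X -> stone_space Y -> closed_equiv E -> closed_equiv E' ->
      compat_closed_rel E E' R -> SR (rconv R) = bdag (SR R)) /\
  (* G is well defined on objects *)
  (forall (d : Order.disp_t) (B : ctbDistrLatticeType d) (S : B -> B -> Prop),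
      S5_subordination S -> stone_space (Ult B) /\ closed_equiv (RS S)) /\
  (* G is well defined on morphisms *)
  (forall (dA dB : Order.disp_t) (A : ctbDistrLatticeType dA) (B : ctbDistrLatticeType dB)
      (S : A -> A -> Prop) (S' : B -> B -> Prop) (T : A -> B -> Prop),
      S5_subordination S -> S5_subordination S' -> compat_sub S S' T ->
      compat_closed_rel (RS S) (RS S') (RS T)) /\
  (* G preserves composition (identities are preserved by definition: G(S) = R_S) *)
  (forall (dA dB dC : Order.disp_t) (A : ctbDistrLatticeType dA)
      (B : ctbDistrLatticeType dB) (C : ctbDistrLatticeType dC)
      (S : A -> A -> Prop) (S' : B -> B -> Prop) (S'' : C -> C -> Prop)
      (T : A -> B -> Prop) (T' : B -> C -> Prop),
      S5_subordination S -> S5_subordination S' -> S5_subordination S'' ->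
      compat_sub S S' T -> compat_sub S' S'' T' ->
      RS (bcomp T T') = rcomp (RS T) (RS T')) /\
  (* natural isomorphism Id ~= G o F on StoneE^R *)
  (exists (alpha : forall (X : topologicalType), set (X * X) -> set (X * Ult (Clop X)))
          (beta : forall (X : topologicalType), set (X * X) -> set (Ult (Clop X) * X)),
      (forall (X : topologicalType) (E : set (X * X)),
          stone_space X -> closed_equiv E ->
          [/\ compat_closed_rel E (RS (SR E)) (alpha X E),
              compat_closed_rel (RS (SR E)) E (beta X E),
              rcomp (alpha X E) (beta X E) = E &
              rcomp (beta X E) (alpha X E) = RS (SR E)]) /\
      (forall (X Y : topologicalType) (E : set (X * X)) (E' : set (Y * Y)) (R : set (X * Y)),
          stone_space X -> stone_space Y -> closed_equiv E -> closed_equiv E' ->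
          compat_closed_rel E E' R ->
          rcomp (alpha X E) (RS (SR R)) = rcomp R (alpha Y E'))) /\
  (* natural isomorphism F o G ~= Id on SubS5^S *)
  (exists (eps : forall (d : Order.disp_t) (B : ctbDistrLatticeType d),
                   (B -> B -> Prop) -> Clop (Ult B) -> B -> Prop)
          (delta : forall (d : Order.disp_t) (B : ctbDistrLatticeType d),
                   (B -> B -> Prop) -> B -> Clop (Ult B) -> Prop),
      (forall (d : Order.disp_t) (B : ctbDistrLatticeType d) (S : B -> B -> Prop),
          S5_subordination S ->
          [/\ compat_sub (SR (RS S)) S (eps d B S),
              compat_sub S (SR (RS S)) (delta d B S),
              bcomp (eps d B S) (delta d B S) = SR (RS S) &
              bcomp (delta d B S) (eps d B S) = S]) /\
      (forall (dA dB : Order.disp_t) (A : ctbDistrLatticeType dA) (B : ctbDistrLatticeType dB)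
          (S : A -> A -> Prop) (S' : B -> B -> Prop) (T : A -> B -> Prop),
          S5_subordination S -> S5_subordination S' -> compat_sub S S' T ->
          bcomp (SR (RS T)) (eps dB B S') = bcomp (eps dA A S) T)).
Proof.
Proof.
split.
  by move=> X E sX hE; exact: F_obj.
split.
  by move=> X Y E E' R sX sY hE hE' hR; exact: F_mor.
split.
  move=> X Y Z E E' E'' R R' sX sY sZ _ _ _ [cR _ _] [cR' _ _].
  exact: SR_rcomp.
split.
  by move=> X Y E E' R1 R2 M sX sY hE hE' c1 c2 hM; exact: F_meet.
split.
  by move=> X Y E E' R _ _ _ _ _; exact: F_dag.
split.
  by move=> d B S hS; exact: G_obj.
split.
  by move=> dA dB A B S S' T hS hS' hT; exact: G_mor.
split.
  move=> dA dB dC A B C S S' S'' T T' _ _ _ [sT _ _] [sT' _ _].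
  exact: RS_comp.
split.
  exists (fun X E => alpha E), (fun X E => beta E); split.
    by move=> X E sX hE; exact: Nat1_obj.
  by move=> X Y E E' R sX sY hE hE' hR; exact: Nat1_mor.
exists eps, delta; split.
  by move=> d B S hS; exact: Nat2_obj.
by move=> dA dB A B S S' T hS hS' hT; exact: Nat2_mor.
Qed.
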